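(* For every square-free integer $m>1$ with $m\ne 6$, $$ \gcd(m,\varphi(m))\le m\exp\left(-\sqrt{\log 2\,\log m}\right). $$
   Context: $\varphi$ denotes Euler's totient function. *)

(* Defs.v *)
From mathcomp Require Import all_boot.
From Stdlib Require Import Reals.

Definition squarefree (m : nat) : Prop :=
  forall p : nat, prime p -> ~ (p * p %| m).

(* Main.v *)
Require Import Defs.
From mathcomp Require Import all_boot.
From Stdlib Require Import Reals.
From mathcomp Require Import zify.
From Stdlib Require Import Lra Psatz.

Lemma sqf_dvd a b : a %| b -> squarefree b -> squarefree a.
Proof. by move=> ab sb p pp pa; apply: (sb p pp); apply: dvdn_trans pa ab. Qed.

Arguments sqf_dvd {a b}.

Lemma sqf_gt0 b : squarefree b -> 0 < b.
Proof. by case: b => // /(_ 2 isT); rewrite dvdn0. Qed.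
Arguments sqf_gt0 {b}.

Lemma sqf_coprime a b : squarefree (a * b) -> coprime a b.
Proof.
move=> s; have := sqf_gt0 s; rewrite muln_gt0 => /andP[a0 b0].
rewrite /coprime; case: (ltngtP (gcdn a b) 1) => // [|g1].
  by rewrite ltnNge gcdn_gt0 a0.
exfalso; have pp := pdiv_prime g1.
apply: (s _ pp); apply: dvdn_mul.
  by apply: dvdn_trans (pdiv_dvd _) (dvdn_gcdl _ _).
by apply: dvdn_trans (pdiv_dvd _) (dvdn_gcdr _ _).
Qed.

Arguments sqf_coprime {a b}.

Lemma prod_dvd p (s : seq nat) (F : nat -> nat) : prime p ->
  p %| \prod_(q <- s) F q -> exists2 q, q \in s & p %| F q.
Proof.
move=> pp; elim: s => [|x s IH]; first by rewrite big_nil dvdn1 => /eqP pe; move: pp; rewrite pe.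
rewrite big_cons Euclid_dvdM // => /orP[h|/IH [q qs h]].
  by exists x; rewrite ?mem_head.
by exists q; rewrite // in_cons qs orbT.
Qed.
Arguments prod_dvd {p s F}.

Lemma KL n p : squarefree n -> prime p -> p %| totient n ->
  exists q, [/\ prime q, q %| n & p %| q.-1].
Proof.
move=> sn pp; have n0 := sqf_gt0 sn.
rewrite totientE // => /(prod_dvd pp) [q].
rewrite mem_primes => /and3P[qp _ qn].
have lg : logn q n = 1.
  have : 0 < logn q n by rewrite logn_gt0 mem_primes qp n0 qn.
  case: (leqP (logn q n) 1) => [|h2 _]; first by case: logn => [|[|]].
  exfalso; apply: (sn q qp).
  by rewrite mulnn pfactor_dvdn.
rewrite lg /= expn0 muln1 => h; by exists q.
Qed.
Arguments KL {n p}.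

Lemma pm1_dvd_tot D q : squarefree D -> prime q -> q %| D -> q.-1 %| totient D.
Proof.
move=> sD qp qD; have DE : D = q * (D %/ q) by rewrite mulnC divnK.
have co : coprime q (D %/ q) by apply: sqf_coprime; rewrite -DE.
by rewrite DE totient_coprime // totient_prime // dvdn_mulr.
Qed.

Lemma tot_le n : totient n <= n.
Proof.
rewrite totient_count_coprime.
apply: (@leq_trans (\sum_(0 <= d < n) 1)).
  by apply: leq_sum => i _; case: coprime.
by rewrite sum_nat_const_nat muln1 subn0.
Qed.

Lemma lemM D n : squarefree (D * n) ->
  (forall p, prime p -> p %| n -> p %| totient (D * n)) -> 1 < n ->
  1 < gcdn n (totient D).
Proof.
move=> s H n1.
have sn : squarefree n by apply: sqf_dvd s; apply: dvdn_mull.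
have n0 := sqf_gt0 sn.
have Pp := max_pdiv_prime n1.
have Pn := max_pdiv_dvd n.
have := H _ Pp Pn; rewrite totient_coprime ?sqf_coprime // Euclid_dvdM //.
case/orP => h.
  apply: leq_trans (prime_gt1 Pp) _; apply: dvdn_leq; first by rewrite gcdn_gt0 n0.
  by rewrite dvdn_gcd Pn h.
exfalso; have [q [qp qn Pq]] := KL sn Pp h.
have q1 := prime_gt1 qp.
have := dvdn_leq _ Pq; have : 0 < q.-1 by lia.
move=> q0 /(_ q0) le1.
have : q <= max_pdiv n by apply: max_pdiv_max; rewrite inE mem_primes qp n0 qn.
lia.
Qed.

Arguments lemM {D n}.

Lemma odd_split k : squarefree k -> exists t o, [/\ k = t * o, odd o & (t = 1) \/ (t = 2)].
Proof.
move=> sk; case ok: (odd k); first by exists 1, k; rewrite mul1n; split; auto.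
have k2 : 2 %| k by rewrite dvdn2 ok.
exists 2, (k %/ 2); split; [by rewrite mulnC divnK | | by right].
case oo: (odd (k %/ 2)) => //; exfalso; apply: (sk 2 isT).
by rewrite -(divnK k2); apply: dvdn_mul => //; rewrite dvdn2 oo.
Qed.

Arguments odd_split {k}.

Lemma odd_factor D : squarefree D -> 2 < D -> exists q, [/\ prime q, q %| D & odd q].
Proof.
move=> sD D2.
have Pp := max_pdiv_prime (ltnW D2).
case: (even_prime Pp) => [P2|oP]; last by exists (max_pdiv D); split => //; apply: max_pdiv_dvd.
exfalso.
have D2d : 2 %| D by rewrite -P2 max_pdiv_dvd.
have DE : D = 2 * (D %/ 2) by rewrite mulnC divnK.
have h1 : 1 < D %/ 2 by move: D2; rewrite DE; lia.
have rp := pdiv_prime h1.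
have rD : pdiv (D %/ 2) %| D by rewrite [X in _ %| X]DE; apply: dvdn_mull; apply: pdiv_dvd.
have : pdiv (D %/ 2) <= max_pdiv D.
  by apply: max_pdiv_max; rewrite inE mem_primes rp (sqf_gt0 sD) rD.
rewrite P2 => le2; have := prime_gt1 rp => g1.
have r2 : pdiv (D %/ 2) = 2 by lia.
apply: (sD 2 isT); rewrite [X in _ %| X]DE; apply: dvdn_mul => //.
by rewrite -{1}r2 pdiv_dvd.
Qed.

Arguments odd_factor {D}. Arguments pm1_dvd_tot {D q}.

Lemma INR_pos n : 0 < n -> (0 < INR n)%R.
Proof. by move/ltP; apply: lt_0_INR. Qed.

Lemma lnle a b : 0 < a -> a <= b -> (ln (INR a) <= ln (INR b))%R.
Proof.
move=> a0 ab; case: (ltngtP a b) ab => // [lt|->] _; last by lra.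
apply: Rlt_le; apply: ln_increasing; first exact: INR_pos.
by apply: lt_INR; apply/ltP.
Qed.

Lemma lnM a b : 0 < a -> 0 < b -> ln (INR (a * b)) = (ln (INR a) + ln (INR b))%R.
Proof. by move=> a0 b0; rewrite mult_INR ln_mult //; apply: INR_pos. Qed.

Lemma ln0 a : 0 < a -> (0 <= ln (INR a))%R.
Proof. by move=> a0; have := @lnle 1 a isT a0; rewrite /= ln_1. Qed.
Arguments ln0 {a}. Arguments lnM {a b}. Arguments INR_pos {n}.

Lemma claim n : forall D, squarefree (D * n) ->
  (forall p, prime p -> p %| n -> p %| totient (D * n)) -> ~ (D = 3 /\ n = 2) ->
  (ln (INR 2) * ln (INR (D * n)) <= ln (INR D) ^ 2)%R.
Proof.
elim/ltn_ind: n => n IH D s H ex.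
have sn : squarefree n by apply: sqf_dvd s; apply: dvdn_mull.
have sD : squarefree D by apply: sqf_dvd s; apply: dvdn_mulr.
have n0 := sqf_gt0 sn.
have D0 := sqf_gt0 sD.
have l0 : (0 <= ln (INR 2))%R by apply: ln0.
case: (leqP n 1) => [nle1|nn1].
  have -> : n = 1 by lia.
  rewrite muln1; have y0 := ln0 D0.
  case: (leqP D 1) => [D1|D1].
    have -> : D = 1 by lia.
    rewrite /= ln_1; lra.
  have h := @lnle 2 D isT D1; nra.
set n1 := gcdn n (totient D).
have g1 : 1 < n1 := lemM s H nn1.
have n1n : n1 %| n := dvdn_gcdl _ _.
have n1t : n1 %| totient D := dvdn_gcdr _ _.
have sn1 : squarefree n1 := sqf_dvd n1n sn.
have [t [o [n1E oo tE]]] := odd_split sn1.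
set n' := n %/ n1.
have e1 : n = n1 * n' by rewrite mulnC divnK.
have nE : n = t * (o * n') by rewrite {1}e1 n1E mulnA.
have : 0 < t * (o * n') by rewrite -nE.
rewrite !muln_gt0 => /and3P[t0 o0 n'0].
have ltn' : n' < n by nia.
have so : squarefree (o * n') by apply: sqf_dvd sn; rewrite nE dvdn_mull.
have Ho : forall p, prime p -> p %| n' -> p %| totient (o * n').
  move=> p pp pn'.
  have pn : p %| n by rewrite nE; do 2 apply: dvdn_mull.
  have := H p pp pn; rewrite totient_coprime ?sqf_coprime // Euclid_dvdM // => /orP[pD|pt].
    exfalso; apply: (s p pp); apply: dvdn_mull.
    have pn1 : p %| n1 by rewrite dvdn_gcd pn pD.
    by rewrite e1; apply: dvdn_mul.
  move: pt; rewrite nE totient_coprime; last by apply: sqf_coprime; rewrite -nE.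
  have -> : totient t = 1 by case: tE => ->.
  by rewrite mul1n.
have tD0 : 0 < totient D by rewrite totient_gt0.
have tD1 : 1 < totient D by apply: leq_trans g1 (dvdn_leq tD0 n1t).
have D2 : 2 < D by rewrite -totient_gt1.
have [q [qp qD oq]] := odd_factor sD D2.
have t2 : 2 %| totient D.
  apply: dvdn_trans (pm1_dvd_tot sD qp qD).
  rewrite dvdn2; move: oq; rewrite -(prednK (prime_gt0 qp)) /=.
  by case: odd.
have o2 : 2 * o %| totient D.
  by rewrite Gauss_dvd ?coprime2n // t2 (dvdn_trans _ n1t) // n1E dvdn_mull.
have o2le : 2 * o <= totient D := dvdn_leq tD0 o2.
have tle := tot_le D.
case: (eqVneq D 3) => [D3|D3].
  exfalso.
  have t3 : totient 3 = 2 by rewrite totient_prime.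
  move: o2le; rewrite D3 t3 => o2le.
  have o1 : o = 1 by lia.
  have n'1 : n' = 1.
    case: (leqP n' 1) => [|h]; first by lia.
    have := lemM so Ho h; rewrite o1 /= gcdn1 //.
  apply: ex; split => //.
  by move: nn1; rewrite nE o1 n'1; case: tE => ->.
have D4 : 3 < D by lia.
have le2D : 2 * o <= D := leq_trans o2le tle.
rewrite nE (lnM D0) ?muln_gt0 ?t0 ?o0 ?n'0 // (lnM t0) ?muln_gt0 ?o0 ?n'0 //.
have hy : (ln (INR 2) + ln (INR 2) <= ln (INR D))%R.
  by rewrite -(@lnM 2 2 isT isT); apply: lnle.
have hlt0 := ln0 t0.
have hlt : (ln (INR t) <= ln (INR 2))%R by apply: lnle => //; case: tE => ->.
have hz : (ln (INR 2) + ln (INR o) <= ln (INR D))%R.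
  by rewrite -(@lnM 2 o isT o0); apply: lnle => //; rewrite muln_gt0 o0.
have z0 := ln0 o0.
case: (eqVneq o 3) => [o3|o3]; first case: (eqVneq n' 2) => [n'2|n'2].
- rewrite o3 n'2 (@lnM 3 2 isT isT).
  rewrite o3 in hz.
  have h89 : (ln (INR (2 * (2 * 2))) <= ln (INR (3 * 3)))%R by apply: lnle.
  rewrite (@lnM 2 (2*2) isT isT) (@lnM 2 2 isT isT) (@lnM 3 3 isT isT) in h89.
  nra.
- have IHo := IH n' ltn' o so Ho ltac:(by case=> _ e; move: n'2; rewrite e).
  nra.
- have IHo := IH n' ltn' o so Ho ltac:(by case=> e _; move: o3; rewrite e).
  nra.
Qed.

Theorem lemma2p1 (m : nat) :
  squarefree m -> 1 < m -> m <> 6 ->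
  (INR (gcdn m (totient m)) <=
     INR m * exp (- sqrt (ln 2 * ln (INR m))))%R.
Proof.
move=> sm m1 m6.
set g := gcdn m (totient m).
have gm : g %| m := dvdn_gcdl _ _.
set d := m %/ g.
have mE : m = d * g by rewrite divnK.
have m0 : 0 < m by lia.
have : 0 < d * g by rewrite -mE.
rewrite muln_gt0 => /andP[d0 g0].
have C := @claim g d.
rewrite -mE in C.
have := C sm; move=> {C} C.
have C2 : (ln (INR 2) * ln (INR m) <= ln (INR d) ^ 2)%R.
  apply: C.
    by move=> p pp pg; apply: dvdn_trans pg (dvdn_gcdr _ _).
  by case=> d3 g2; apply: m6; rewrite mE d3 g2.
have e2 : INR 2 = 2%R by simpl; lra.
rewrite e2 in C2.
have y0 := ln0 d0.
set s := sqrt _.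
have hs : (s <= ln (INR d))%R.
  rewrite /s -(sqrt_pow2 (ln (INR d))) //; exact: sqrt_le_1_alt.
have hE : (exp s <= INR d)%R.
  rewrite -(exp_ln (INR d)); last exact: INR_pos.
  case: (Rle_lt_or_eq_dec _ _ hs) => [h|->]; last by lra.
  by apply: Rlt_le; apply: exp_increasing.
have one : (exp s * exp (- s) = 1)%R by rewrite -exp_plus Rplus_opp_r exp_0.
have ep := exp_pos (- s).
have gp := INR_pos g0.
rewrite mE mult_INR.
have h : (1 <= INR d * exp (- s))%R.
  rewrite -one; apply: Rmult_le_compat_r; lra.
nra.
Qed.
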